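(* Let $H$ be a Hilbert space, $K\subset H$ a compact set, $C\ge1$ and $n\in\mathbb N$. Then $$ e^{\rm cont}_{4n+1}(K,H)\le 2C\, e^{\rm non}_{n,C}(K,H). $$
   Context: A sequence $\mathcal B=\{h_1,h_2,\dots\}\subset H$ is a Riesz basis of $H$ if finite linear combinations are dense in $H$ and there are constants $0<A\le B$ with $A(\sum_k|\alpha_k|^2)^{1/2}\le\|\sum_k\alpha_kh_k\|_H\le B(\sum_k|\alpha_k|^2)^{1/2}$ for all finitely supported scalar sequences; $A,B$ denote the optimal such constants. For $C\ge1$, $\mathcal B_C$ is the set of Riesz bases of $H$ with $B/A\le C$. Best $n$-term approximation: $\sigma_n(u,\mathcal B)_H=\inf_{i_1,\dots,i_n}\inf_{c_1,\dots,c_n}\|u-\sum_{k=1}^nc_kh_{i_k}\|_H$. Define $e^{\rm non}_{n,C}(K,H)=\inf_{\mathcal B\in\mathcal B_C}\sup_{u\in K}\sigma_n(u,\mathcal B)_H$ and $e^{\rm cont}_n(K,H)=\inf_{N_n,\varphi_n}\sup_{u\in K}\|\varphi_n(N_n(u))-u\|_H$, where the infimum is over all continuous maps $N_n:K\to\mathbb R^n$ and $\varphi_n:\mathbb R^n\to H$. *)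

(* Defs.v *)
From HB Require Import structures.
From mathcomp Require Import all_boot all_order all_algebra.
From mathcomp Require Import all_classical all_reals all_analysis.
Set Implicit Arguments. Unset Strict Implicit. Unset Printing Implicit Defensive.
Import Order.TTheory GRing.Theory Num.Theory.
Import numFieldNormedType.Exports.
Local Open Scope classical_set_scope.
Local Open Scope ring_scope.

Section Defs.
Variable R : realType.

Definition inner_product_of_norm (V : normedModType R) (ip : V -> V -> R) :=
  [/\ (forall x y, ip x y = ip y x),
      (forall (a : R) (x y z : V), ip (a *: x + y) z = a * ip x z + ip y z)
    & (forall x : V, `|x| ^+ 2 = ip x x)].

Definition is_hilbert (V : completeNormedModType R) :=
  exists ip : V -> V -> R, inner_product_of_norm ip.

Definition lincomb (V : normedModType R) (h : nat -> V) (N : nat) (a : nat -> R) : V :=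
  \sum_(i < N) a i *: h i.
Definition l2norm (N : nat) (a : nat -> R) : R :=
  Num.sqrt (\sum_(i < N) a i ^+ 2).

Definition riesz_basis_with (V : normedModType R) (h : nat -> V) (A B : R) :=
  [/\ (forall (u : V) (eps : R), 0 < eps ->
         exists N a, `|u - lincomb h N a| < eps),
      0 < A, A <= B
    & (forall N a, A * l2norm N a <= `|lincomb h N a| /\
                   `|lincomb h N a| <= B * l2norm N a)].

Definition riesz_bases_C (V : normedModType R) (C : R) : set (nat -> V) :=
  [set h | exists A B, riesz_basis_with h A B /\ B <= C * A].

Definition sigma_n (V : normedModType R) (n : nat) (u : V) (h : nat -> V) : \bar R :=
  ereal_inf [set r | exists (idx : nat -> nat) (c : nat -> R),
              r = (`| u - \sum_(k < n) c k *: h (idx k) |)%:E].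

Definition e_non (V : normedModType R) (n : nat) (C : R) (K : set V) : \bar R :=
  ereal_inf [set ereal_sup [set sigma_n n u h | u in K] | h in @riesz_bases_C V C].

Definition e_cont (V : normedModType R) (n : nat) (K : set V) : \bar R :=
  ereal_inf [set r | exists (Nn : V -> 'rV[R]_n) (phi : 'rV[R]_n -> V),
              [/\ {within K, continuous Nn}, continuous phi &
                 r = ereal_sup [set (`| phi (Nn u) - u |)%:E | u in K]]].

End Defs.

(* Main.v *)
Require Import Defs.
From HB Require Import structures.
From mathcomp Require Import all_boot all_order all_algebra.
From mathcomp Require Import all_classical all_reals all_analysis.
From mathcomp Require Import lra ring zify.
Import Order.TTheory GRing.Theory Num.Theory.
Import numFieldNormedType.Exports.
Local Open Scope classical_set_scope.
Local Open Scope ring_scope.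

Section Gen.
Variable R : realType.

Lemma cont_sum (T : topologicalType) (W : normedModType R) (p : nat)
  (F : nat -> T -> W) :
  (forall i, continuous (F i)) -> continuous (fun x => \sum_(i < p) F i x).
Proof.
move=> hF; elim: p => [|p IH].
  move=> x; under eq_fun do rewrite big_ord0; exact: cvg_cst.
move=> x; under eq_fun do rewrite big_ord_recr /=.
exact: (continuousD (IH x) (hF p x)).
Qed.

Variable X : normedModType R.

Definition pw (c : X) (r : R) (y : X) : R := Order.max 0 (2 * r - `|y - c|).
Definition pu (p : nat) (cs : nat -> X) (r : R) (i : nat) (y : X) : R :=
  pw (cs i) r y / Order.max (\sum_(k < p) pw (cs k) r y) r.

Lemma pw_cont c r : continuous (pw c r).
Proof.
move=> x; apply: (@continuous_max _ _ (fun=> 0) (fun y => 2 * r - `|y - c|)).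
  exact: cvg_cst.
apply: continuousB; first exact: cvg_cst.
apply: (continuous_comp (f := fun y => y - c)).
  apply: continuousB; [exact: cvg_id | exact: cvg_cst].
exact: norm_continuous.
Qed.

Lemma pw_ge0 c r y : 0 <= pw c r y.
Proof. by rewrite /pw le_max lexx. Qed.

Lemma pu_cont p cs r i : 0 < r -> continuous (pu p cs r i).
Proof.
move=> r0 x.
have h3 : {for x, continuous (fun y => Order.max (\sum_(k < p) pw (cs k) r y) r)}.
  have hs : continuous (fun y => \sum_(k < p) pw (cs k) r y).
    exact: (@cont_sum X R^o p (fun k => pw (cs k) r) (fun k => @pw_cont (cs k) r)).
  exact: (@continuous_max _ _ (fun y => \sum_(k < p) pw (cs k) r y) (fun=> r) x (hs x) (cvg_cst _)).
have hn : Order.max (\sum_(k < p) pw (cs k) r x) r != 0.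
  by rewrite gt_eqF // lt_max r0 orbT.
have h2 := @continuousV _ _ (fun y => Order.max (\sum_(k < p) pw (cs k) r y) r) x hn h3.
exact (continuousM (pw_cont (cs i) r x) h2).
Qed.

Lemma pu_ge0 p cs r i y : 0 < r -> 0 <= pu p cs r i y.
Proof.
move=> r0; rewrite /pu divr_ge0 ?pw_ge0 //.
by rewrite le_max (ltW r0) orbT.
Qed.

Lemma pw0 c r y : 2 * r - `|y - c| <= 0 -> pw c r y = 0.
Proof. by move=> h; apply: max_l. Qed.

Lemma pwE c r y : 0 <= 2 * r - `|y - c| -> pw c r y = 2 * r - `|y - c|.
Proof. by move=> h; apply: max_r. Qed.

Lemma pu_pos p cs r i y : 0 < pu p cs r i y -> `|y - cs i| < 2 * r.
Proof.
rewrite /pu; case: (leP (2 * r - `|y - cs i|) 0) => h.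
  by rewrite pw0 // mul0r ltxx.
by move=> _; rewrite -subr_gt0.
Qed.

Lemma pu_sum1 p cs r y : 0 < r -> (exists k, (k < p)%N /\ `|y - cs k| < r) ->
  \sum_(i < p) pu p cs r i y = 1.
Proof.
move=> r0 [k [kp hk]].
have hS : r < \sum_(k < p) pw (cs k) r y.
  rewrite (bigD1 (Ordinal kp)) //=.
  have h2 : 0 <= \sum_(i < p | i != Ordinal kp) pw (cs i) r y.
    by apply: sumr_ge0 => j _; exact: pw_ge0.
  have h1 : r < pw (cs k) r y.
    rewrite pwE; first lra.
    have : 0 < r by []. lra.
  lra.
rewrite /pu -mulr_suml (max_idPl (ltW hS)) divff //.
by rewrite gt_eqF // (lt_trans r0 hS).
Qed.

Lemma pu_conv (W : normedModType R) p cs r y (v : nat -> W) t D :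
  0 < r -> (exists k, (k < p)%N /\ `|y - cs k| < r) ->
  (forall i, (i < p)%N -> `|y - cs i| < 2 * r -> `|v i - t| <= D) ->
  `|\sum_(i < p) pu p cs r i y *: v i - t| <= D.
Proof.
move=> r0 hk hD.
have h1 := pu_sum1 p cs r y r0 hk.
have -> : t = \sum_(i < p) pu p cs r i y *: t by rewrite -scaler_suml h1 scale1r.
rewrite -sumrB.
apply: (le_trans (ler_norm_sum _ _ _)).
apply: (@le_trans _ _ (\sum_(i < p) pu p cs r i y * D)); last first.
  by rewrite -mulr_suml h1 mul1r.
apply: ler_sum => i _; rewrite -scalerBr normrZ ger0_norm; last exact: pu_ge0.
have := pu_ge0 p cs r i y r0; rewrite le_eqVlt => /orP [/eqP <-|hp].
  by rewrite !mul0r.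
by rewrite ler_pM2l // hD // (pu_pos _ _ _ _ _ hp).
Qed.

End Gen.
Section Net.
Variable R : realType.
Lemma net (V W : normedModType R) (K : set V) (hK : compact K) (F : V -> W)
  (hF : continuous F) (r : R) (r0 : 0 < r) :
  exists p (cs : nat -> V), (forall i, (i < p)%N -> K (cs i)) /\
    forall u, K u -> exists i, (i < p)%N /\ `|F u - F (cs i)| < r.
Proof.
rewrite compact_cover in hK.
have := hK V K (fun v => F @^-1` (ball (F v) r)).
case.
- move=> v _; apply: open_comp; first by move=> x _; exact: hF.
  exact: ball_open.
- by move=> u Ku; exists u => //=; exact: ballxx.
move=> D' sD' cov.
exists (size (finmap.enum_fset D')), (fun i => nth 0 (finmap.enum_fset D') i); split.
  by move=> i ip; apply/set_mem/sD'; apply: mem_nth.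
move=> u Ku; have [v Dv /= hv] := cov u Ku.
exists (index v (finmap.enum_fset D')); split; first by rewrite index_mem.
rewrite nth_index //.
by move: hv; rewrite -ball_normE /ball_ /= distrC.
Qed.
End Net.
Section Vdm.
Variable R : realType.

Lemma le_sum_term (I : finType) (F : I -> R) (i0 : I) :
  (forall i, 0 <= F i) -> F i0 <= \sum_i F i.
Proof.
move=> h; rewrite (bigD1 i0) //= lerDl; by apply: sumr_ge0.
Qed.

Definition Pv (M : nat) (T : {set 'I_M}) (j0 : 'I_M) : {poly R} :=
  \prod_(j <- enum (T :\ j0)) ('X - ((val j)%:R)%:P).

Arguments Pv {M}.

Definition kappa (M m : nat) : R :=
  \sum_(T : {set 'I_M}) \sum_(j0 : 'I_M)
     (\sum_(i < m) `|(Pv T j0)`_i|) / `|(Pv T j0).[(val j0)%:R]|.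

Lemma Pv_root M (T : {set 'I_M}) (j0 j : 'I_M) : j \in T -> j != j0 ->
  (Pv T j0).[(val j)%:R] = 0.
Proof.
move=> jT jj0; rewrite /Pv horner_prod.
apply/eqP/negPn/negP; rewrite prodf_seq_neq0 => /allP /(_ j).
rewrite mem_enum in_setD1 jj0 jT hornerXsubC subrr eqxx => /(_ isT).
done.
Qed.

Lemma Pv_neq0 M (T : {set 'I_M}) (j0 : 'I_M) : (Pv T j0).[(val j0)%:R] != 0.
Proof.
rewrite /Pv horner_prod prodf_seq_neq0; apply/allP => j.
rewrite mem_enum in_setD1 => /andP [jj0 _] /=; rewrite hornerXsubC subr_eq0.
rewrite eqr_nat; apply: contra jj0 => /eqP h; apply/eqP/val_inj => /=.
by rewrite h.
Qed.

Lemma Pv_size M (T : {set 'I_M}) (j0 : 'I_M) : j0 \in T ->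
  size (Pv T j0) = #|T|.
Proof.
move=> jT; rewrite /Pv size_prod_XsubC -cardE.
by rewrite (cardsD1 j0 T) jT.
Qed.

Lemma kappa_ge0 M m : 0 <= kappa M m.
Proof.
apply: sumr_ge0 => T _; apply: sumr_ge0 => j _; apply: divr_ge0 => //.
by apply: sumr_ge0.
Qed.

Lemma vdm_bound M m (w : nat -> R) (D : R) :
  0 <= D -> (#|[set j : 'I_M | w j != 0%R]%SET| <= m)%N ->
  (forall i, (i < m)%N -> `|\sum_(j < M) w j * (j%:R) ^+ i| <= D) ->
  forall j0 : 'I_M, `|w j0| <= kappa M m * D.
Proof.
move=> D0 hcard hmu j0.
set T := [set j : 'I_M | w j != 0%R]%SET.
have [wj0|wj0] := eqVneq (w j0) 0.
  by rewrite wj0 normr0 mulr_ge0 // kappa_ge0.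
have j0T : j0 \in T by rewrite inE.
set p := Pv T j0.
have hsz : (size p <= m)%N by rewrite /p Pv_size.
have key : \sum_(i < m) p`_i * (\sum_(j < M) w j * (j%:R) ^+ i)
   = w j0 * p.[(val j0)%:R].
  transitivity (\sum_(j < M) w j * p.[(val j)%:R]).
    under eq_bigr do rewrite mulr_sumr.
    rewrite exchange_big /=; apply: eq_bigr => j _.
    rewrite (horner_coef_wide _ hsz) mulr_sumr; apply: eq_bigr => i _.
    by rewrite mulrCA.
  rewrite (bigD1 j0) //= big1 ?addr0 // => j jj0.
  have [wj|wj] := eqVneq (w j) 0; first by rewrite wj mul0r.
  by rewrite Pv_root ?mulr0 // inE.
have hp0 := @Pv_neq0 M T j0.
have h1 : `|w j0| * `|p.[(val j0)%:R]| <= (\sum_(i < m) `|p`_i|) * D.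
  rewrite -normrM -key; apply: (le_trans (ler_norm_sum _ _ _)).
  rewrite mulr_suml; apply: ler_sum => i _; rewrite normrM.
  by apply: ler_wpM2l => //; apply: hmu.
have hpos : 0 < `|p.[(val j0)%:R]| by rewrite normr_gt0.
apply: (@le_trans _ _ ((\sum_(i < m) `|p`_i|) / `|p.[(val j0)%:R]| * D)).
  by rewrite mulrAC ler_pdivlMr.
apply: ler_wpM2r => //.
pose F (S : {set 'I_M}) (j : 'I_M) :=
  (\sum_(i < m) `|(Pv S j)`_i|) / `|(Pv S j).[(val j)%:R]|.
have Fge0 S j : 0 <= F S j by apply: divr_ge0 => //; exact: sumr_ge0.
apply: (@le_trans _ _ (\sum_(j : 'I_M) F T j)).
  exact: (le_sum_term _ (F T) j0 (Fge0 T)).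
apply: (le_sum_term _ (fun S => \sum_(j : 'I_M) F S j) T).
by move=> S; apply: sumr_ge0.
Qed.
End Vdm.
Section Soft.
Variable R : realType.

Definition soft (tau t : R) : R := t - Order.max (- tau) (Order.min t tau).

Lemma soft_cont tau : continuous (soft tau).
Proof.
move=> x.
have h1 : {for x, continuous (fun t : R => Order.min t tau)}.
  exact: (@continuous_min _ _ (fun t : R => t) (fun=> tau) x cvg_id (cvg_cst _)).
have h2 : {for x, continuous (fun t : R => Order.max (- tau) (Order.min t tau))}.
  exact: (@continuous_max _ _ (fun=> - tau) (fun t : R => Order.min t tau) x (cvg_cst _) h1).
exact: (@continuousB _ R^o _ (fun t : R => t) _ x cvg_id h2).
Qed.

Lemma soft_neq0 tau t : 0 <= tau -> soft tau t != 0 -> tau < `|t|.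
Proof.
move=> t0; rewrite /soft; apply: contraR; rewrite -leNgt => h.
move: h; rewrite ler_norml => /andP [h1 h2].
rewrite (_ : Order.min t tau = t); last exact: min_l.
by rewrite (_ : Order.max (- tau) t = t) ?subrr //; exact: max_r.
Qed.

Lemma soft_err1 tau t : 0 <= tau -> `|t - soft tau t| <= tau.
Proof.
move=> t0; rewrite /soft opprB addrC subrK.
case: (leP t tau) => h1.
  case: (leP (- tau) t) => h2; first by rewrite ler_norml h1 h2.
  by rewrite normrN ger0_norm.
case: (leP (- tau) tau) => h2; first by rewrite ger0_norm.
lra.
Qed.

Lemma soft_err2 tau t : 0 <= tau -> `|t - soft tau t| <= `|t|.
Proof.
move=> t0; rewrite /soft opprB addrC subrK.
case: (leP t tau) => h1.
  case: (leP (- tau) t) => h2; first by [].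
  rewrite normrN ger0_norm // ler0_norm; lra.
case: (leP (- tau) tau) => h2; last lra.
rewrite !ger0_norm //; lra.
Qed.

Lemma sparse_est n M (x c : nat -> R) (S : pred nat) (tau : R) :
  0 < tau ->
  (forall j, ~~ S j -> c j = 0) ->
  (#|[set j : 'I_M | S j]%SET| <= n)%N ->
  \sum_(j < M) (x j - c j) ^+ 2 <= n%:R * tau ^+ 2 ->
  (#|[set j : 'I_M | (tau < `|x j|)%R]%SET| <= n + n)%N /\
  \sum_(j < M) (x j - soft tau (x j)) ^+ 2 <= (n + n)%:R * tau ^+ 2.
Proof.
move=> t0 hc hS hsum.
have t20 : 0 < tau ^+ 2 by rewrite exprn_gt0.
have hge0 j : 0 <= (x j - c j) ^+ 2 by rewrite sqr_ge0.
split.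
  set L := [set j : 'I_M | tau < `|x j|]%SET.
  set S' := [set j : 'I_M | S j]%SET.
  have -> : L = (L :&: S') :|: (L :\: S').
    by rewrite finset.setDE -finset.setIUr finset.setUCr finset.setIT.
  apply: (leq_trans (leq_card_setU _ _)); apply: leq_add.
    by apply: (leq_trans _ hS); apply: subset_leq_card; exact: subsetIr.
  rewrite -(ler_nat R).
  have hsub : (#|L :\: S'|%:R * tau ^+ 2 <= n%:R * tau ^+ 2).
    apply: (le_trans _ hsum).
    rewrite mulrC mulr_natr -sumr_const. 
    apply: (@le_trans _ _ (\sum_(j in L :\: S') (x j - c j) ^+ 2)).
      apply: ler_sum => j; rewrite !inE => /andP [jS jL].
      rewrite hc // subr0 -(real_normK (num_real (x j))).
      rewrite lerXn2r ?nnegrE ?ltW //; exact: lt_trans jL.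
    rewrite [X in _ <= X](bigID (fun j => j \in L :\: S')) /=.
    rewrite lerDl; by apply: sumr_ge0 => j _.
  by rewrite -(ler_pM2r t20).
rewrite (bigID (fun j : 'I_M => S j)) /=.
rewrite natrD mulrDl; apply: lerD.
  apply: (@le_trans _ _ (\sum_(j < M | S j) tau ^+ 2)).
    apply: ler_sum => j _.
    rewrite -(real_normK (num_real (x j - _))) lerXn2r ?nnegrE ?normr_ge0 ?(ltW t0) //.
    exact: soft_err1 (ltW t0).
  rewrite sumr_const -[tau ^+ 2 *+ _]mulr_natl ler_pM2r // ler_nat.
  apply: leq_trans hS; rewrite leq_eqVlt; apply/orP; left; apply/eqP.
  by apply: eq_card => j; rewrite !inE.
apply: (le_trans _ hsum).
apply: (@le_trans _ _ (\sum_(j < M | ~~ S j) (x j - c j) ^+ 2)).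
  apply: ler_sum => j hj.
  rewrite hc // subr0 -(real_normK (num_real (x j - _))) -(real_normK (num_real (x j))) lerXn2r ?nnegrE //.
  exact: soft_err2 (ltW t0).
rewrite [X in _ <= X](bigID (fun j : 'I_M => ~~ S j)) /= lerDl.
by apply: sumr_ge0 => j _.
Qed.
End Soft.
Arguments soft {R}.
Arguments pw {R X}.
Arguments pu {R X}.
Arguments kappa {R}.
Arguments Pv {R M}.

Section Riesz.
Variable R : realType.
Variable V : normedModType R.

Lemma lincomb_widen (h : nat -> V) M N (a : nat -> R) : (M <= N)%N ->
  lincomb h N (fun j => if (j < M)%N then a j else 0) = lincomb h M a.
Proof.
move=> MN; rewrite /lincomb (big_ord_widen N (fun j => a j *: h j)) //.
rewrite [RHS]big_mkcond; apply: eq_bigr => j _.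
by case: ifP => _ //; rewrite scale0r.
Qed.

Definition cco n (idx : nat -> nat) (c : nat -> R) (j : nat) : R :=
  \sum_(k < n) (if idx k == j then c k else 0).

Lemma sparse_repr (h : nat -> V) n (idx : nat -> nat) (c : nat -> R) N :
  (forall k, (k < n)%N -> (idx k < N)%N) ->
  \sum_(k < n) c k *: h (idx k) = lincomb h N (cco n idx c).
Proof.
move=> hidx; rewrite /lincomb /cco.
under [RHS]eq_bigr do rewrite scaler_suml.
rewrite exchange_big /=; apply: eq_bigr => k _.
rewrite (bigD1 (Ordinal (hidx k (ltn_ord k)))) //= eqxx big1 ?addr0 //.
move=> j hj; case: eqP => [e|_]; last by rewrite scale0r.
by move: hj; rewrite -val_eqE /= e eqxx.
Qed.

Lemma card_supp n (idx : nat -> nat) M :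
  (#|[set j : 'I_M | [exists k : 'I_n, idx k == val j]]%SET| <= n)%N.
Proof.
set A := [set j : 'I_M | _]%SET.
have [->|[j0 j0A]] := set_0Vmem A; first by rewrite cards0.
pose f (k : 'I_n) : 'I_M := insubd j0 (idx k).
apply: (@leq_trans #|f @: [set: 'I_n]|%SET).
  apply: subset_leq_card; apply/fintype.subsetP => j; rewrite inE => /existsP [k /eqP hk].
  apply/imsetP; exists k; rewrite ?inE //; apply: val_inj.
  rewrite /f insubdK; first by rewrite hk.
  by rewrite hk; exact: ltn_ord.
by apply: (leq_trans (leq_imset_card _ _)); rewrite cardsT card_ord.
Qed.

Lemma cco_supp n (idx : nat -> nat) (c : nat -> R) (j : nat) : ~~ [exists k : 'I_n, idx k == j] -> cco n idx c j = 0.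
Proof.
move=> /existsPn hj; rewrite /cco big1 // => k _.
by rewrite ifN //; exact: hj.
Qed.

Lemma sum_sub_le (N M : nat) (F : nat -> R) : (M <= N)%N -> (forall j, 0 <= F j) ->
  \sum_(j < M) F j <= \sum_(j < N) F j.
Proof.
move=> MN hF; rewrite (big_ord_widen N F MN) big_mkcond /=.
by apply: ler_sum => j _; case: ifP.
Qed.

Lemma anal (h : nat -> V) A n (n0 : (0 < n)%N)
  (hlow : forall N a, A * l2norm N a <= `|lincomb h N a|) (A0 : 0 < A)
  M (x : nat -> R) (u : V) (e r3 : R) (idx : nat -> nat) (c : nat -> R) :
  `|u - \sum_(k < n) c k *: h (idx k)| <= e -> `|lincomb h M x - u| <= r3 ->
  0 < e + r3 ->
  ((#|[set j : 'I_M | ((e + r3) / (A * Num.sqrt n%:R) < `|x j|)%R]%SET| <= n + n)%N) /\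
  (\sum_(j < M) (x j - soft ((e + r3) / (A * Num.sqrt n%:R)) (x j)) ^+ 2
     <= (n + n)%:R * ((e + r3) / (A * Num.sqrt n%:R)) ^+ 2).
Proof.
move=> hg hx d0.
set d := e + r3; set tau := d / (A * Num.sqrt n%:R).
have sn0 : 0 < Num.sqrt (n%:R : R) by rewrite sqrtr_gt0 ltr0n.
have tau0 : 0 < tau by rewrite /tau divr_gt0 // mulr_gt0.
set N := maxn M (\max_(k < n) (idx k).+1).
have hidx : forall k, (k < n)%N -> (idx k < N)%N.
  move=> k kn; rewrite /N leq_max; apply/orP; right.
  exact: (@leq_bigmax _ (fun k : 'I_n => (idx k).+1) (Ordinal kn)).
set c' := cco n idx c.
set X := fun j => if (j < M)%N then x j else 0.
have MN : (M <= N)%N by rewrite /N leq_maxl.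
have hlin : lincomb h N (fun j => X j - c' j) = lincomb h M x - \sum_(k < n) c k *: h (idx k).
  rewrite (sparse_repr h n idx c N hidx) -(lincomb_widen h M N x MN) /lincomb -sumrB.
  by apply: eq_bigr => j _; rewrite scalerBl.
have hA : A * l2norm N (fun j => X j - c' j) <= d.
  apply: (le_trans (hlow _ _)); rewrite hlin.
  have -> : lincomb h M x - \sum_(k < n) c k *: h (idx k) =
     (lincomb h M x - u) + (u - \sum_(k < n) c k *: h (idx k)) by rewrite addrA subrK.
  apply: (le_trans (ler_normD _ _)); rewrite /d addrC; exact: lerD.
have hSN : \sum_(j < N) (X j - c' j) ^+ 2 <= n%:R * tau ^+ 2.
  have hs0 : 0 <= \sum_(j < N) (X j - c' j) ^+ 2 by apply: sumr_ge0 => j _; exact: sqr_ge0.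
  have e1 : n%:R * tau ^+ 2 = (d / A) ^+ 2.
    rewrite /tau !expr_div_n exprMn sqr_sqrtr ?ler0n //.
    field; apply/andP; split; first by rewrite gt_eqF.
    by rewrite pnatr_eq0 -lt0n.
  rewrite e1 -(sqr_sqrtr hs0) lerXn2r ?nnegrE ?sqrtr_ge0 ?divr_ge0 ?(ltW A0) ?(ltW d0) //.
  by rewrite ler_pdivlMr // mulrC.
have hSM : \sum_(j < M) (x j - c' j) ^+ 2 <= n%:R * tau ^+ 2.
  apply: le_trans hSN.
  have -> : \sum_(j < M) (x j - c' j) ^+ 2 = \sum_(j < M) (X j - c' j) ^+ 2.
    by apply: eq_bigr => j _; rewrite /X ltn_ord.
  by apply: (sum_sub_le N M (fun j => (X j - c' j) ^+ 2) MN) => j; exact: sqr_ge0.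
apply: (@sparse_est R n M x c' (fun j => [exists k : 'I_n, idx k == j]) tau) => //.
- by move=> j hj; apply: cco_supp.
- exact: card_supp.
Qed.

End Riesz.

Section Core.
Variable R : realType.
Variable V : normedModType R.

Lemma nat4 n : ((n + n) + (n + n) <= 4 * n + 1)%N.
Proof. lia. Qed.

Lemma entry_le m (y : 'rV[R]_m) (i : 'I_m) : `|y ord0 i| <= `|y|.
Proof. rewrite [X in _ <= X]mx_normrE. exact: (le_bigmax _ _ (ord0, i)). Qed.

Lemma core (h : nat -> V) A B C (K : set V) (hK : compact K) n (n0 : (0 < n)%N)
  (e : R) (e0 : 0 <= e) (hrb : riesz_basis_with h A B) (hBC : B <= C * A)
  (hC : 1 <= C)
  (happ : forall u, K u -> exists (idx : nat -> nat) (c : nat -> R), `|u - \sum_(k < n) c k *: h (idx k)| <= e)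
  (del : R) (del0 : 0 < del) :
  exists (Nn : V -> 'rV[R]_(4 * n + 1)) (phi : 'rV[R]_(4 * n + 1) -> V),
    [/\ continuous Nn, continuous phi &
      forall u, K u -> `|phi (Nn u) - u| <= 2 * C * e + del].
Proof.
case: hrb => hdense A0 AB hrz.
have C0 : 0 < C by apply: (lt_le_trans _ hC).
pose rho := del / (12 * C + 6).
have rho0 : 0 < rho by rewrite divr_gt0 //; lra.
have [p [cs [csK cov]]] := @net R V V K hK id (fun x => cvg_id) rho rho0.
have approx : forall i, exists Na : nat * (nat -> R), `|cs i - lincomb h Na.1 Na.2| < rho.
  by move=> i; have [N [a ha]] := hdense (cs i) rho rho0; exists (N, a).
case: (choice approx) => Na hNa.
pose M := (\max_(i < p) (Na i).1)%N.
pose Ai i j := if (j < (Na i).1)%N then (Na i).2 j else 0.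
have hAi : forall i, (i < p)%N -> lincomb h M (Ai i) = lincomb h (Na i).1 (Na i).2.
  move=> i ip; apply: lincomb_widen.
  exact: (@leq_bigmax _ (fun i : 'I_p => (Na i).1) (Ordinal ip)).
pose x u j := \sum_(i < p) pu p cs rho i u * Ai i j.
have xcont : forall j, continuous (fun u => x u j).
  move=> j.
  have hi : forall i, continuous (fun u => pu p cs rho i u * Ai i j).
    move=> i u.
    exact (@continuousM _ _ (pu p cs rho i) (fun=> Ai i j) u (@pu_cont R V p cs rho i rho0 u) (cvg_cst _)).
  exact (@cont_sum R V R^o p (fun i u => pu p cs rho i u * Ai i j) hi).
have Tx : forall u, lincomb h M (x u) = \sum_(i < p) pu p cs rho i u *: lincomb h M (Ai i).
  move=> u; rewrite /lincomb /x.
  under eq_bigr do rewrite scaler_suml.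
  rewrite exchange_big /=; apply: eq_bigr => i _.
  by rewrite scaler_sumr; apply: eq_bigr => j _; rewrite scalerA.
have hTx : forall u, K u -> `|lincomb h M (x u) - u| <= 3 * rho.
  move=> u Ku; rewrite Tx.
  apply: (@pu_conv R V V p cs rho u (fun i => lincomb h M (Ai i)) u (3 * rho) rho0).
    by have [i [ip hi]] := cov u Ku; exists i.
  move=> i ip hi; rewrite hAi //.
  have -> : lincomb h (Na i).1 (Na i).2 - u =
    (lincomb h (Na i).1 (Na i).2 - cs i) + (cs i - u) by rewrite addrA subrK.
  apply: (le_trans (ler_normD _ _)).
  rewrite [`|lincomb _ _ _ - _|]distrC [`|cs i - u|]distrC.
  have := hNa i; lra.
pose d := e + 3 * rho.
have d0 : 0 < d by rewrite /d; lra.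
pose tau := d / (A * Num.sqrt n%:R).
have sn0 : 0 < Num.sqrt (n%:R : R) by rewrite sqrtr_gt0 ltr0n.
have tau0 : 0 < tau by rewrite /tau divr_gt0 // mulr_gt0.
pose th u j := soft tau (x u j).
pose m := (4 * n + 1)%N.
pose wv (j : nat) : 'rV[R]_m := \row_(r < m) ((j%:R : R) ^+ r).
pose f u := \sum_(j < M) th u j *: wv j.
have fcont : continuous f.
  have hj : forall j, continuous (fun u => th u j *: wv j).
    move=> j u.
    have h1 : {for u, continuous (fun u => th u j)}.
      exact: (continuous_comp (xcont j u) (@soft_cont R tau (x u j))).
    exact (@continuousZr_tmp _ _ _ (fun u => th u j) (wv j) u h1).
  exact (@cont_sum R V _ M (fun j u => th u j *: wv j) hj).
have hanal : forall u, K u ->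
    ((#|[set j : 'I_M | (tau < `|x u j|)%R]%SET| <= n + n)%N) /\
    (\sum_(j < M) (x u j - th u j) ^+ 2 <= (n + n)%:R * tau ^+ 2).
  move=> u Ku; have [idx [c hc]] := happ u Ku.
  have HH := (@anal R V h A n n0 (fun N a => proj1 (hrz N a)) A0 M (x u) u e (3 * rho) idx c hc (hTx u Ku) d0).
  exact HH.
have B0 : 0 < B by apply: (lt_le_trans A0 AB).
have linB : forall (a b : nat -> R), lincomb h M a - lincomb h M b = lincomb h M (fun j => a j - b j).
  move=> a b; rewrite /lincomb -sumrB; apply: eq_bigr => j _; by rewrite scalerBl.
have herr : forall u, K u -> `|lincomb h M (th u) - lincomb h M (x u)| <= 2 * C * d.
  move=> u Ku; have [_ hs] := hanal u Ku.
  rewrite linB; apply: (le_trans (proj2 (hrz M _))); rewrite /l2norm.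
  set q := 2 * d / A.
  have q0 : 0 <= q by rewrite /q divr_ge0 // ?mulr_ge0 // ltW.
  have hsq : \sum_(j < M) (th u j - x u j) ^+ 2 <= q ^+ 2.
    have -> : \sum_(j < M) (th u j - x u j) ^+ 2 = \sum_(j < M) (x u j - th u j) ^+ 2.
      by apply: eq_bigr => j _; rewrite -opprB sqrrN.
    apply: (le_trans hs).
    have e1 : (n + n)%:R * tau ^+ 2 = 2 * (d / A) ^+ 2.
      rewrite /tau !expr_div_n exprMn sqr_sqrtr ?ler0n // natrD.
      field; apply/andP; split; first by rewrite gt_eqF.
      by rewrite pnatr_eq0 -lt0n.
    rewrite e1 /q !expr_div_n exprMn.
    have : 0 <= d ^+ 2 / A ^+ 2 by rewrite divr_ge0 // sqr_ge0.
    have -> : 2 ^+ 2 * d ^+ 2 / A ^+ 2 = 4 * (d ^+ 2 / A ^+ 2) by rewrite !mulrA; congr (_ * _ / _); rewrite expr2; lra.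
    lra.
  have hs0 : 0 <= \sum_(j < M) (th u j - x u j) ^+ 2 by apply: sumr_ge0 => j _; exact: sqr_ge0.
  have hsqrt : Num.sqrt (\sum_(j < M) (th u j - x u j) ^+ 2) <= q.
    have : Num.sqrt (\sum_(j < M) (th u j - x u j) ^+ 2) <= Num.sqrt (q ^+ 2).
      by rewrite ler_sqrt // sqr_ge0.
    by rewrite sqrtr_sqr ger0_norm.
  apply: (le_trans (ler_wpM2l (ltW B0) hsqrt)).
  have hqA : q * A = 2 * d by rewrite /q mulrVK // unitfE gt_eqF.
  apply: (@le_trans _ _ (C * A * q)); first by rewrite ler_wpM2r.
  by rewrite -mulrA [A * q]mulrC hqA mulrCA -[2 * C * d]mulrA.
pose Lam := kappa M m * \sum_(j < M) `|h j|.
have Lam0 : 0 <= Lam by rewrite /Lam mulr_ge0 ?kappa_ge0 //; apply: sumr_ge0.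
have fE : forall u (i : 'I_m), f u ord0 i = \sum_(j < M) th u j * (j%:R) ^+ i.
  move=> u i; rewrite /f summxE; apply: eq_bigr => j _.
  by rewrite mxE /wv mxE.
have hlip : forall u v, K u -> K v ->
    `|lincomb h M (th u) - lincomb h M (th v)| <= Lam * `|f u - f v|.
  move=> u v Ku Kv.
  pose w j := th u j - th v j.
  have hw : (#|[set j : 'I_M | w j != 0%R]%SET| <= m)%N.
    apply: (@leq_trans #|[set j : 'I_M | (tau < `|x u j|)%R]%SET :|:
                         [set j : 'I_M | (tau < `|x v j|)%R]%SET|).
      apply: subset_leq_card; apply/fintype.subsetP => j; rewrite !inE => hj.
      case: (eqVneq (th u j) 0) => hu.
        apply/orP; right; apply: (@soft_neq0 R tau _ (ltW tau0)).
        by move: hj; rewrite /w hu sub0r oppr_eq0.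
      by apply/orP; left; exact: (@soft_neq0 R tau _ (ltW tau0)).
    apply: (leq_trans (leq_card_setU _ _)).
    apply: (leq_trans (leq_add (proj1 (hanal u Ku)) (proj1 (hanal v Kv)))).
    exact: nat4.
  have hmu : forall i, (i < m)%N -> `|\sum_(j < M) w j * (j%:R) ^+ i| <= `|f u - f v|.
    move=> i im.
    have -> : \sum_(j < M) w j * (j%:R) ^+ i = (f u - f v) ord0 (Ordinal im).
      rewrite !mxE !fE -sumrB; apply: eq_bigr => j _; by rewrite mulrBl.
    exact: entry_le.
  have hb := @vdm_bound R M m w `|f u - f v| (normr_ge0 _) hw hmu.
  rewrite linB /lincomb; apply: (le_trans (ler_norm_sum _ _ _)).
  apply: (@le_trans _ _ (\sum_(j < M) (kappa M m * `|f u - f v|) * `|h j|)).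
    apply: ler_sum => j _; rewrite normrZ; apply: ler_wpM2r => //; exact: hb.
  by rewrite -mulr_sumr /Lam mulrAC.
pose r := del / (4 * (Lam + 1)).
have r0 : 0 < r by rewrite /r divr_gt0 // mulr_gt0 //; lra.
have [p' [cs' [cs'K cov']]] := @net R V _ K hK f fcont r r0.
pose ys i := f (cs' i).
pose phi (y : 'rV[R]_m) := \sum_(i < p') pu p' ys r i y *: lincomb h M (th (cs' i)).
have phicont : continuous phi.
  have hi : forall i, continuous (fun y => pu p' ys r i y *: lincomb h M (th (cs' i))).
    move=> i y.
    exact (@continuousZr_tmp _ _ _ (pu p' ys r i) _ y (@pu_cont R _ p' ys r i r0 y)).
  exact (@cont_sum R _ V p' _ hi).
exists f, phi; split => // u Ku.
have hdec : `|phi (f u) - lincomb h M (th u)| <= Lam * (2 * r).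
  apply: (@pu_conv R _ V p' ys r (f u) (fun i => lincomb h M (th (cs' i)))
     (lincomb h M (th u)) (Lam * (2 * r)) r0).
    by have [i [ip hi]] := cov' u Ku; exists i.
  move=> i ip hi; apply: (le_trans (hlip _ _ (cs'K i ip) Ku)).
  by apply: ler_wpM2l => //; rewrite distrC ltW.
have hr : Lam * (2 * r) <= del / 2.
  have -> : Lam * (2 * r) = (del / 2) * (Lam / (Lam + 1)).
    rewrite /r; field; rewrite gt_eqF //; lra.
  rewrite ger_pMr ?divr_gt0 //.
  by rewrite ler_pdivrMr ?mul1r; lra.
have hrho : rho * (12 * C + 6) = del by rewrite /rho mulrVK // unitfE gt_eqF //; lra.
have h1 := herr u Ku; have h2 := hTx u Ku.
have -> : phi (f u) - u = (phi (f u) - lincomb h M (th u)) +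
   (lincomb h M (th u) - lincomb h M (x u)) + (lincomb h M (x u) - u).
  by rewrite !addrA !subrK.
apply: (le_trans (ler_normD _ _)); apply: (le_trans (lerD (ler_normD _ _) (lexx _))).
have hd : 2 * C * d = 2 * C * e + 6 * (C * rho) by rewrite /d; ring.
have hrho' : 12 * (C * rho) + 6 * rho = del by rewrite -hrho; ring.
lra.
Qed.
End Core.

Section Main.
Variable R : realType.
Variable V : normedModType R.

Lemma core_all (h : nat -> V) A B C (K : set V) (hK : compact K) n
  (e : R) (e0 : 0 <= e) (hrb : riesz_basis_with h A B) (hBC : B <= C * A)
  (hC : 1 <= C)
  (happ : forall u, K u -> exists (idx : nat -> nat) (c : nat -> R),
      `|u - \sum_(k < n) c k *: h (idx k)| <= e)
  (del : R) (del0 : 0 < del) :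
  exists (Nn : V -> 'rV[R]_(4 * n + 1)) (phi : 'rV[R]_(4 * n + 1) -> V),
    [/\ continuous Nn, continuous phi &
      forall u, K u -> `|phi (Nn u) - u| <= 2 * C * e + del].
Proof.
case: n happ => [|n] happ.
  exists (fun=> 0), (fun=> 0); split; first by move=> x; exact: cvg_cst.
    exact: cst_continuous.
  move=> u Ku; have [idx [c hc]] := happ u Ku.
  move: hc; rewrite big_ord0 subr0 sub0r normrN => hc.
  have : 0 <= e * (2 * C - 1) by apply: mulr_ge0 => //; lra.
  have -> : 2 * C * e = e * (2 * C - 1) + e by ring.
  lra.
exact: (@core R V h A B C K hK n.+1 isT e e0 hrb hBC hC happ del del0).
Qed.
End Main.

Theorem proposition1 (R : realType) (V : completeNormedModType R)
    (hV : is_hilbert V) (K : set V) (hK : compact K) (C : R) (hC : 1 <= C)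
    (n : nat) :
  (e_cont (4 * n + 1)%N K <= (2 * C)%:E * e_non n C K)%E.
Proof.
have C0 : 0 < 2 * C by lra.
rewrite -lee_pdivrMl //.
apply: le_ereal_inf_tmp => _ [h [A [B [hrb hBC]]] <-].
rewrite lee_pdivrMl //.
set es := ereal_sup _.
have hsig0 : forall u, (0 <= sigma_n n u h)%E.
  move=> u; apply: le_ereal_inf_tmp => _ [idx [c ->]]; by rewrite lee_fin.
have hsigle : forall u, K u -> (sigma_n n u h <= es)%E.
  by move=> u Ku; apply: ereal_sup_ubound; exists u.
have [[u0 Ku0]|K0] := pselect (exists u, K u); last first.
  apply: (@le_trans _ _ (ereal_sup [set (`| 0 - u |)%:E | u in K])).
    apply: ereal_inf_lbound; exists (fun=> 0), (fun=> 0); split => //.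
      by apply: continuous_subspaceT => x; exact: cvg_cst.
    exact: cst_continuous.
  have -> : ereal_sup [set (`| 0 - u |)%:E | u in K] = -oo%E.
    apply/eqP; rewrite -leeNy_eq; apply: ge_ereal_sup => y [u Ku _].
    by exfalso; apply: K0; exists u.
  exact: leNye.
have es0 : (0 <= es)%E := le_trans (hsig0 u0) (hsigle u0 Ku0).
case: es es0 hsigle => [s| |] es0 hsigle; last by [].
  2: by rewrite gt0_muley ?lte_fin // leey.
rewrite lee_fin in es0.
apply/lee_addgt0Pr => eps eps0.
pose eta := eps / (4 * C).
have eta0 : 0 < eta by rewrite divr_gt0 //; lra.
have happ : forall u, K u -> exists (idx : nat -> nat) (c : nat -> R),
    `|u - \sum_(k < n) c k *: h (idx k)| <= s + eta.
  move=> u Ku.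
  have : (sigma_n n u h < (s + eta)%:E)%E.
    by apply: (le_lt_trans (hsigle u Ku)); rewrite lte_fin; lra.
  move=> /ereal_inf_lt [_ [idx [c ->]]]; rewrite lte_fin => hlt.
  by exists idx, c; apply: ltW.
have [Nn [phi [hNn hphi herr]]] :=
  @core_all R V h A B C K hK n (s + eta) (ltac:(lra)) hrb hBC hC happ (eps / 2)
    (ltac:(apply: divr_gt0 => //)).
apply: (@le_trans _ _ (ereal_sup [set (`| phi (Nn u) - u |)%:E | u in K])).
  apply: ereal_inf_lbound; exists Nn, phi; split => //.
  exact: continuous_subspaceT.
apply: ge_ereal_sup => _ [u Ku <-].
rewrite -EFinM -EFinD lee_fin.
apply: (le_trans (herr u Ku)).
have -> : 2 * C * (s + eta) = 2 * C * s + eps / 2.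
  rewrite /eta; field; rewrite gt_eqF //; lra.
lra.
Qed.
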